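(* Let $d\ge1$ be odd. Then for every $x\in[-1+\tfrac2d,1]$ there exists a unitary $U\in U(d)$ with $\operatorname{tr}[U\overline{U}]/d=x$, and $$\max\Big\{\frac{|\operatorname{tr}U|}{d}:\ U\in U(d),\ \frac{\operatorname{tr}[U\overline U]}{d}=x\Big\}=\Big[\tfrac12\big(1-\tfrac1d\big)\big(1-\tfrac2d+x\big)\Big]^{1/2}+\frac1d.$$
   Context: $\overline{U}$ denotes the entrywise complex conjugate of $U$. *)

(* Defs.v *)
From HB Require Import structures.
From mathcomp Require Import all_boot all_order all_algebra.
From mathcomp Require Import reals.
From mathcomp Require Import complex.
Set Implicit Arguments. Unset Strict Implicit. Unset Printing Implicit Defensive.
Import Order.TTheory GRing.Theory Num.Theory.
Local Open Scope ring_scope.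

Definition entry_conj {C : numClosedFieldType} {n : nat} (U : 'M[C]_n) : 'M[C]_n :=
  map_mx Num.conj U.

Definition unitary {C : numClosedFieldType} {n : nat} (U : 'M[C]_n) : Prop :=
  U *m (entry_conj U)^T = 1%:M.

(* Main.v *)
Require Import Defs.
From HB Require Import structures.
From mathcomp Require Import all_boot all_order all_algebra.
From mathcomp Require Import reals.
From mathcomp Require Import complex.
From mathcomp Require Import ring lra.
Import Order.TTheory GRing.Theory Num.Theory.
Local Open Scope ring_scope.

Module P1.
Set Implicit Arguments. Unset Strict Implicit. Unset Printing Implicit Defensive.
Local Open Scope ring_scope.

Section Generic.
Variable C : numClosedFieldType.

Definition adj m n (A : 'M[C]_(m, n)) : 'M[C]_(n, m) := (map_mx Num.conj A)^T.

Lemma adjE m n (A : 'M[C]_(m, n)) i j : adj A i j = (A j i)^*.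
Proof. by rewrite !mxE. Qed.

Lemma adjM m n p (A : 'M[C]_(m, n)) (B : 'M[C]_(n, p)) : adj (A *m B) = adj B *m adj A.
Proof. by rewrite /adj map_mxM trmx_mul. Qed.

Lemma adjK m n (A : 'M[C]_(m, n)) : adj (adj A) = A.
Proof. by apply/matrixP => i j; rewrite !adjE conjCK. Qed.

Lemma adjD m n (A B : 'M[C]_(m, n)) : adj (A + B) = adj A + adj B.
Proof. by apply/matrixP => i j; rewrite !mxE rmorphD. Qed.

Lemma adjN m n (A : 'M[C]_(m, n)) : adj (- A) = - adj A.
Proof. by apply/matrixP => i j; rewrite !mxE rmorphN. Qed.

Lemma adjZ m n a (A : 'M[C]_(m, n)) : adj (a *: A) = a^* *: adj A.
Proof. by apply/matrixP => i j; rewrite !mxE rmorphM. Qed.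

Lemma adj1 n : adj (1%:M : 'M[C]_n) = 1%:M.
Proof. by apply/matrixP => i j; rewrite !mxE eq_sym; case: eqP; rewrite ?conjC1 ?conjC0. Qed.

Lemma tr_adj n (A : 'M[C]_n) : \tr (adj A) = (\tr A)^*.
Proof. by rewrite /adj mxtrace_tr trace_map_mx. Qed.

Definition F m n (X : 'M[C]_(m, n)) := \tr (X *m adj X).
Definition G m n (X Y : 'M[C]_(m, n)) := \tr (X *m adj Y).

Lemma FE m n (X : 'M[C]_(m, n)) : F X = \sum_i \sum_j `|X i j| ^+ 2.
Proof.
rewrite /F /mxtrace; apply: eq_bigr => i _; rewrite mxE.
by apply: eq_bigr => j _; rewrite adjE normCK.
Qed.

Lemma F_ge0 m n (X : 'M[C]_(m, n)) : 0 <= F X.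
Proof. by rewrite FE; apply: sumr_ge0 => i _; apply: sumr_ge0 => j _; apply: exprn_ge0; apply: normr_ge0. Qed.

Lemma F_eq0 m n (X : 'M[C]_(m, n)) : F X = 0 -> X = 0.
Proof.
rewrite FE => /eqP; rewrite psumr_eq0; last by move=> i _; apply: sumr_ge0 => j _; apply: exprn_ge0; apply: normr_ge0.
move=> /allP H; apply/matrixP => i j; rewrite mxE.
have /implyP/(_ isT) := H i (mem_index_enum i).
rewrite psumr_eq0; last by move=> k _; apply: exprn_ge0; apply: normr_ge0.
move=> /allP/(_ j (mem_index_enum j))/implyP/(_ isT).
by rewrite sqrf_eq0 normr_eq0 => /eqP.
Qed.

Lemma F_conj m n (X : 'M[C]_(m, n)) : (F X)^* = F X.
Proof. exact: geC0_conj (F_ge0 X). Qed.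

Lemma F_adj m n (X : 'M[C]_(m, n)) : F (adj X) = F X.
Proof. by rewrite /F adjK mxtrace_mulC. Qed.

Lemma G_sym m n (X Y : 'M[C]_(m, n)) : G Y X = (G X Y)^*.
Proof. by rewrite /G -tr_adj adjM adjK. Qed.

Lemma GXX m n (X : 'M[C]_(m, n)) : G X X = F X.
Proof. by []. Qed.

Lemma F_lin m n (a b : C) (X Y : 'M[C]_(m, n)) :
  F (a *: X + b *: Y) = a * a^* * F X + a * b^* * G X Y + b * a^* * G Y X + b * b^* * F Y.
Proof.
rewrite /F /G adjD !adjZ mulmxDl !mulmxDr !mxtraceD.
rewrite -!scalemxAl -!scalemxAr !mxtraceZ; ring.
Qed.

Lemma adj0 m n : adj (0 : 'M[C]_(m, n)) = 0.
Proof. by apply/matrixP => i j; rewrite !mxE conjC0. Qed.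

Lemma CS m n (X Y : 'M[C]_(m, n)) : `|G X Y| ^+ 2 <= F X * F Y.
Proof.
have [Y0|Yn0] := eqVneq (F Y) 0.
  by rewrite (F_eq0 Y0) /G adj0 mulmx0 mxtrace0 normr0 expr0n /= /F adj0 mulmx0 mxtrace0 mulr0.
have Fpos : 0 < F Y by rewrite lt_def Yn0 F_ge0.
have H := F_ge0 (F Y *: X + (- G X Y) *: Y).
rewrite F_lin (G_sym X Y) F_conj rmorphN in H.
have E : F Y * F Y * F X + F Y * - (G X Y)^* * G X Y + - G X Y * F Y * (G X Y)^* + - G X Y * - (G X Y)^* * F Y
  = F Y * (F X * F Y - G X Y * (G X Y)^*) by ring.
rewrite E in H.
rewrite pmulr_rge0 // subr_ge0 in H.
by rewrite normCK.
Qed.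

Lemma adjT m n (A : 'M[C]_(m, n)) : adj (A^T) = map_mx Num.conj A.
Proof. by apply/matrixP => i j; rewrite !mxE. Qed.

Lemma trmx_adj m n (A : 'M[C]_(m, n)) : (adj A)^T = map_mx Num.conj A.
Proof. by apply/matrixP => i j; rewrite !mxE. Qed.

Section Proj.
Variable n : nat.
Variable Q : 'M[C]_n.
Hypothesis Qa : adj Q = Q.
Hypothesis QQ : Q *m Q = Q.

Lemma projC : adj (1%:M - Q) = 1%:M - Q.
Proof. by rewrite adjD adjN adj1 Qa. Qed.

Lemma projCC : (1%:M - Q) *m (1%:M - Q) = 1%:M - Q.
Proof. by rewrite mulmxBl mul1mx mulmxBr mulmx1 QQ subrr subr0. Qed.

Lemma trQF_gen (P : 'M[C]_n) k (X : 'M[C]_(n, k)) : adj P = P -> P *m P = P ->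
  \tr (P *m (X *m adj X)) = F (P *m X).
Proof.
move=> Pa PP; rewrite /F adjM Pa.
rewrite (mxtrace_mulC (P *m X)) -mulmxA (mulmxA P P) PP.
by rewrite mxtrace_mulC mulmxA.
Qed.

Lemma F_splitl k (X : 'M[C]_(n, k)) : F X = F (Q *m X) + F ((1%:M - Q) *m X).
Proof.
rewrite -trQF_gen // -trQF_gen ?projC ?projCC // -mxtraceD -mulmxDl.
by rewrite addrC subrK mul1mx.
Qed.

Lemma F_splitr k (X : 'M[C]_(k, n)) : F X = F (X *m Q) + F (X *m (1%:M - Q)).
Proof.
rewrite -F_adj (F_splitl (adj X)) -(F_adj (X *m Q)) -(F_adj (X *m (1%:M - Q))).
by rewrite !adjM Qa projC.
Qed.

Lemma F_proj : F Q = \tr Q.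
Proof. by rewrite /F Qa QQ. Qed.

End Proj.

Lemma trU_key d (U Q : 'M[C]_d) : U *m adj U = 1%:M -> adj Q = Q -> Q *m Q = Q -> \tr Q = 1 ->
  let S := 2^-1 *: (U + U^T) in S *m Q = U *m Q ->
  exists t : C, `|\tr U| <= 1 + `|t| /\ `|t| ^+ 2 <= (d%:R - 1) * (F S - 1).
Proof.
move=> Uu Qa QQ trQ S SQ.
have Uu' : adj U *m U = 1%:M by apply: mulmx1C.
have trS : \tr S = \tr U.
  rewrite /S mxtraceZ mxtraceD mxtrace_tr; field; by rewrite ?pnatr_eq0.
have FUQ : F (U *m Q) = 1.
  by rewrite /F adjM Qa mulmxA -(mulmxA U) QQ mxtrace_mulC mulmxA Uu' mul1mx.
have trUQ : `|\tr (U *m Q)| <= 1.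
  have := CS Q (adj (U *m Q)).
  rewrite /G adjK F_adj FUQ F_proj // trQ mulr1 mxtrace_mulC -mulmxA QQ.
  have [->|] := eqVneq `|\tr (U *m Q)| 1; first by [].
  move=> ne H; rewrite -(ler_pXn2r (n:=2)) ?expr1n ?nnegrE //=.
exists (\tr (S *m (1%:M - Q))); split.
  rewrite -trS.
  have -> : \tr S = \tr (S *m Q) + \tr (S *m (1%:M - Q)).
    by rewrite -mxtraceD -mulmxDr addrC subrK mulmx1.
  rewrite SQ; apply: le_trans (ler_normD _ _) _; by apply: lerD.
have -> : \tr (S *m (1%:M - Q)) = G (1%:M - Q) (adj (S *m (1%:M - Q))).
  by rewrite /G adjK [in RHS]mxtrace_mulC -mulmxA projCC.
apply: le_trans (CS _ _) _.
rewrite F_adj F_proj ?projC ?projCC // linearB /= mxtrace1 trQ.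
rewrite (F_splitr Qa QQ S) SQ FUQ.
by rewrite addrAC subrr add0r.
Qed.

Lemma FS_formula d (U : 'M[C]_d) : U *m adj U = 1%:M ->
  F (2^-1 *: (U + U^T)) = (d%:R + \tr (U *m map_mx Num.conj U)) / 2.
Proof.
move=> Uu; have Uu' : adj U *m U = 1%:M by apply: mulmx1C.
rewrite /F adjZ adjD adjT -scalemxAl -scalemxAr !mxtraceZ.
rewrite mulmxDl !mulmxDr !mxtraceD Uu mxtrace1.
have e1 : \tr (U^T *m map_mx Num.conj U) = d%:R.
  by rewrite -trmx_adj -trmx_mul mxtrace_tr Uu' mxtrace1.
have e2 : \tr (U^T *m adj U) = \tr (U *m map_mx Num.conj U).
  by rewrite -mxtrace_tr trmx_mul (trmxK U) trmx_adj mxtrace_mulC.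
rewrite e1 e2 rmorphV ?unitfE ?pnatr_eq0 // rmorph_nat; field.
by rewrite ?pnatr_eq0.
Qed.

Lemma exists_Q d (U : 'M[C]_d) : odd d ->
  exists Q : 'M[C]_d, [/\ adj Q = Q, Q *m Q = Q, \tr Q = 1 &
     (2^-1 *: (U + U^T)) *m Q = U *m Q].
Proof.
move=> od.
set A := U - U^T.
have AT : A^T = - A by rewrite /A linearB /= trmxK opprB.
have detA : \det A = 0.
  have : \det A = - \det A.
    rewrite -{1}det_tr AT -scaleN1r detZ -signr_odd od expr1 mulN1r.
    by [].
  move/eqP; rewrite -subr_eq0 opprK -mulr2n mulrn_eq0 /=; by move/eqP.
have : \det A^T == 0 by rewrite det_tr detA.
move/det0P => [r rn0 rA].
set w0 := r^T.
have Aw0 : A *m w0 = 0 by rewrite /w0 -(trmxK A) -trmx_mul rA trmx0.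
have Uw0 : U^T *m w0 = U *m w0.
  by apply/eqP; rewrite eq_sym -subr_eq0 -mulmxBl -/A Aw0.
set n0 := F (adj w0).
have n0pos : 0 < n0.
  rewrite lt_def F_ge0 andbT; apply/eqP => /F_eq0 h.
  by move: rn0; rewrite -(trmxK r) -/w0 -(adjK w0) h adj0 trmx0 eqxx.
set c := sqrtC n0.
have cpos : 0 < c by rewrite sqrtC_gt0.
have cc : c^* = c by apply: geC0_conj; apply: ltW.
set w := c^-1 *: w0.
have ww : adj w *m w = 1%:M.
  rewrite /w adjZ -scalemxAl -scalemxAr scalerA.
  rewrite (mx11_scalar (adj w0 *m w0)).
  have -> : (adj w0 *m w0) 0 0 = n0 by rewrite /n0 /F adjK /mxtrace big_ord1.
  rewrite -scalemx1 scalerA.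
  suff -> : c^-1^* / c * n0 = 1 by rewrite scale1r.
  rewrite (geC0_conj (x:=c^-1)); last by rewrite invr_ge0 ltW.
  rewrite -[n0](sqrtCK n0) -/c; field; by rewrite gt_eqF.
exists (w *m adj w); split.
- by rewrite adjM adjK.
- by rewrite mulmxA -(mulmxA w) ww mulmx1.
- by rewrite mxtrace_mulC ww mxtrace1.
- rewrite !mulmxA; congr (_ *m _).
  have Uw : U^T *m w = U *m w by rewrite /w -!scalemxAr Uw0.
  rewrite -scalemxAl mulmxDl Uw -[X in X + X]scale1r -scalerDl scalerA.
  by rewrite mulVf ?scale1r // pnatr_eq0.
Qed.

Lemma upper_gen d (U : 'M[C]_d) : odd d -> U *m adj U = 1%:M ->
  exists t : C, `|\tr U| <= 1 + `|t| /\
     `|t| ^+ 2 <= (d%:R - 1) * ((d%:R + \tr (U *m map_mx Num.conj U)) / 2 - 1).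
Proof.
move=> od Uu; have [Q [Qa QQ trQ SQ]] := exists_Q U od.
have := trU_key Uu Qa QQ trQ SQ.
by rewrite FS_formula.
Qed.

End Generic.

End P1.
Import P1.

Module P2.
Set Implicit Arguments. Unset Strict Implicit. Unset Printing Implicit Defensive.
Local Open Scope ring_scope. Local Open Scope complex_scope.

Lemma normC_real (R : rcfType) (z : R[i]) : exists a : R, `|z| = a%:C /\ 0 <= a.
Proof. exists (Num.sqrt ((complex.Re z)^+2 + (complex.Im z)^+2)); split; [exact: normc_def | exact: sqrtr_ge0]. Qed.

Lemma upper_R (R : realType) d (U : 'M[R[i]]_d) (x : R) : (1 <= d)%N -> odd d -> -1 + 2 / d%:R <= x -> unitary U ->
  \tr (U *m entry_conj U) / d%:R = x%:C%C ->
  `|\tr U| / d%:R <= (Num.sqrt (2^-1 * (1 - d%:R^-1) * (1 - 2 / d%:R + x)) + d%:R^-1)%:C%C.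
Proof.
move=> d1 od hx Uu htr.
have [t [h1 h2]] := upper_gen od Uu.
have dpos : (0 : R) < d%:R by rewrite ltr0n.
have trE : \tr (U *m map_mx Num.conj U) = (d%:R * x)%:C%C.
  rewrite rmorphM /= rmorph_nat -htr mulrC divfK //.
  by rewrite pnatr_eq0 -lt0n.
rewrite trE in h2.
have [a [ea a0]] := normC_real (\tr U).
have [b [eb b0]] := normC_real t.
rewrite ea eb in h1; rewrite eb in h2.
have h1' : a <= 1 + b by rewrite -lecR rmorphD /= rmorph1.
have E : ((d%:R - 1) * ((d%:R + d%:R * x) / 2 - 1))%:C = 
    (d%:R - 1) * ((d%:R + (d%:R * x)%:C) / 2 - 1) :> R[i].
  by rewrite rmorphM rmorphB rmorph1 rmorph_nat rmorphB rmorph1 fmorph_div rmorphD !rmorph_nat.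
have h2' : b ^+ 2 <= (d%:R - 1) * ((d%:R + d%:R * x) / 2 - 1).
  by rewrite -lecR rmorphXn E.
rewrite ea.
have -> : a%:C / d%:R = (a / d%:R)%:C :> R[i] by rewrite fmorph_div rmorph_nat.
rewrite lecR.
set y := 2^-1 * (1 - d%:R^-1) * (1 - 2 / d%:R + x).
have dn0 : (d%:R : R) != 0 by rewrite gt_eqF.
have y0 : 0 <= y.
  rewrite /y !mulr_ge0 //.
  - by rewrite invr_ge0 ler0n.
  - by rewrite subr_ge0 invf_le1 // ler1n.
  - lra.
have ey : (d%:R - 1) * ((d%:R + d%:R * x) / 2 - 1) = (d%:R * Num.sqrt y) ^+ 2.
  rewrite exprMn sqr_sqrtr // /y; field.
  by [].
have hb : b <= d%:R * Num.sqrt y.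
  rewrite -(ler_pXn2r (n:=2)) ?nnegrE // ?mulr_ge0 ?sqrtr_ge0 ?ler0n //.
  by rewrite -ey.
rewrite ler_pdivrMr // mulrDl mulVf //.
lra.
Qed.

End P2.
Import P2.

Module P3.
Set Implicit Arguments. Unset Strict Implicit. Unset Printing Implicit Defensive.
Local Open Scope ring_scope.

Section Real.
Variable R : comNzRingType.

Definition UR m (c s : R) : 'M[R]_(1 + (m + m)) :=
  block_mx (1%:M : 'M_1) 0 0 (block_mx (c%:M : 'M_m) s%:M (- s)%:M c%:M).

Lemma scM m (a b : R) : (a%:M : 'M_m) *m b%:M = (a * b)%:M.
Proof. by rewrite scalar_mxM. Qed.

Lemma UR_unitary m (c s : R) : c ^+ 2 + s ^+ 2 = 1 -> UR m c s *m (UR m c s)^T = 1%:M.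
Proof.
move=> cs; rewrite /UR !tr_block_mx !tr_scalar_mx !trmx0 !mulmx_block.
rewrite !mulmx0 !mul0mx !mulmx1 !addr0 !add0r !scM.
rewrite [RHS]scalar_mx_block; congr block_mx.
rewrite [RHS]scalar_mx_block; congr block_mx;
  rewrite -raddfD /=; apply/matrixP => i j; rewrite !mxE; case: (i == j);
  rewrite /= ?mulr1n ?mulr0n -?cs; ring.
Qed.

Lemma UR_tr2 m (c s : R) : \tr (UR m c s *m UR m c s) = 1 + (m + m)%:R * (c ^+ 2 - s ^+ 2).
Proof.
rewrite /UR !mulmx_block !mulmx0 !mul0mx !mulmx1 !addr0 !add0r !scM.
rewrite !mxtrace_block -!raddfD /= !mxtrace_scalar.
rewrite -mulr_natr natrD; ring.
Qed.

Lemma UR_tr m (c s : R) : \tr (UR m c s) = 1 + (m + m)%:R * c.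
Proof.
rewrite /UR !mxtrace_block !mxtrace_scalar -mulr_natr natrD; ring.
Qed.

End Real.

Section Lift.
Variable R : realType.
Local Open Scope complex_scope.

Definition UC m (c s : R) : 'M[R[i]]_(1 + (m + m)) := map_mx (real_complex R) (UR m c s).

Lemma conj_real (r : R) : Num.conj (r%:C) = r%:C.
Proof. exact: conjc_real. Qed.

Lemma conj_UC m c s : entry_conj (UC m c s) = UC m c s.
Proof. by apply/matrixP => i j; rewrite !mxE conj_real. Qed.

Lemma UC_unitary m (c s : R) : c ^+ 2 + s ^+ 2 = 1 -> unitary (UC m c s).
Proof.
move=> cs; rewrite /unitary conj_UC /UC map_trmx -map_mxM UR_unitary //.
by rewrite map_mx1.
Qed.

Lemma UC_tr2 m (c s : R) :
  \tr (UC m c s *m entry_conj (UC m c s)) = (1 + (m + m)%:R * (c ^+ 2 - s ^+ 2))%:C.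
Proof. by rewrite conj_UC /UC -map_mxM trace_map_mx UR_tr2. Qed.

Lemma UC_tr m (c s : R) : \tr (UC m c s) = (1 + (m + m)%:R * c)%:C.
Proof. by rewrite /UC trace_map_mx UR_tr. Qed.

End Lift.

End P3.
Import P3.

Module P4.
Set Implicit Arguments. Unset Strict Implicit. Unset Printing Implicit Defensive.
Local Open Scope ring_scope.

Lemma exist_part (R : realType) (m : nat) (x : R) :
  -1 + 2 / (1 + (m + m))%:R <= x <= 1 ->
  exists U : 'M[R[i]]_(1 + (m + m)), [/\ unitary U,
     \tr (U *m entry_conj U) / (1 + (m + m))%:R = x%:C%C
   & `|\tr U| / (1 + (m + m))%:R =
      (Num.sqrt (2^-1 * (1 - (1 + (m + m))%:R^-1) * (1 - 2 / (1 + (m + m))%:R + x))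
        + (1 + (m + m))%:R^-1)%:C%C].
Proof.
set D : R := (1 + (m + m))%:R.
move=> /andP[hx1 hx2].
have DE : D = 1 + (m + m)%:R by rewrite /D natrD.
set M : R := (m + m)%:R.
have M0 : 0 <= M by rewrite ler0n.
have Dpos : 0 < D by rewrite ltr0n.
have DC : (1 + (m + m))%:R = D%:C%C :> R[i] by rewrite rmorph_nat.
set y := 2^-1 * (1 - D^-1) * (1 - 2 / D + x).
have [m0|mpos] := posnP m.
  have D1 : D = 1 by rewrite /D m0.
  have x1 : x = 1 by move: hx1; rewrite D1; lra.
  exists (UC m 1 0); split.
  - by apply: UC_unitary; rewrite expr1n expr0n addr0.
  - by rewrite UC_tr2 DC -fmorph_div m0 x1 D1 /= mul0r addr0 divr1.
  - rewrite UC_tr DC -fmorph_div /y D1 invr1 subrr mulr0 mul0r sqrtr0 add0r m0 addn0 mul0r addr0.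
    by rewrite mulr1 Normc.normc1.
have Mpos : 0 < M by rewrite ltr0n; rewrite addn_gt0 mpos.
have hm : 0 < (m%:R : R) by rewrite ltr0n.
have hMm : M = m%:R + m%:R by rewrite /M natrD.
have y0 : 0 <= y.
  rewrite /y !mulr_ge0 //.
  - by rewrite invr_ge0 ler0n.
  - by rewrite subr_ge0 invf_le1 // DE lerDl.
  - lra.
set c := D * Num.sqrt y / M.
have c0 : 0 <= c by rewrite /c !mulr_ge0 ?invr_ge0 ?sqrtr_ge0 // ltW.
have c2 : c ^+ 2 = (D - 2 + x * D) / (2 * M).
  rewrite /c !exprMn sqr_sqrtr // /y DE; field.
  by repeat (apply/andP; split); rewrite gt_eqF //; lra.
have c2le : c ^+ 2 <= 1.
  rewrite c2 ler_pdivrMr ?mulr_gt0 // mul1r DE.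
  have : x * (1 + M) <= 1 * (1 + M) by rewrite ler_wpM2r // addr_ge0.
  lra.
set s := Num.sqrt (1 - c ^+ 2).
have s2 : s ^+ 2 = 1 - c ^+ 2 by rewrite sqr_sqrtr // subr_ge0.
exists (UC m c s); split.
- by apply: UC_unitary; rewrite s2 addrC subrK.
- rewrite UC_tr2 DC -fmorph_div; congr (_%:C)%C.
  rewrite s2 -/M c2 DE; field.
  by repeat (apply/andP; split); rewrite gt_eqF //; lra.
- rewrite UC_tr DC ger0_norm; last first.
    by rewrite ler0c; apply: addr_ge0 => //; apply: mulr_ge0.
  rewrite -fmorph_div; congr (_%:C)%C.
  rewrite -/M /c; field.
  by repeat (apply/andP; split); rewrite gt_eqF //; lra.
Qed.

End P4.
Import P4.

Unset Implicit Arguments.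

Theorem proposition5 (R : realType) (d : nat) :
  (1 <= d)%N -> odd d ->
  forall x : R, -1 + 2 / d%:R <= x <= 1 ->
  let v : R := Num.sqrt (2^-1 * (1 - d%:R^-1) * (1 - 2 / d%:R + x)) + d%:R^-1 in
  (exists U : 'M[R[i]]_d, unitary U /\ \tr (U *m entry_conj U) / d%:R = x%:C%C) /\
  (exists U : 'M[R[i]]_d, [/\ unitary U, \tr (U *m entry_conj U) / d%:R = x%:C%C
                            & `|\tr U| / d%:R = v%:C%C]) /\
  (forall U : 'M[R[i]]_d, unitary U -> \tr (U *m entry_conj U) / d%:R = x%:C%C ->
                            `|\tr U| / d%:R <= v%:C%C).
Proof.
move=> d1 od x hx v.
have [m dE] : exists m, d = (1 + (m + m))%N.
  exists d./2; rewrite addnn -[LHS]odd_double_half od.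
  by [].
subst d.
have [U [Uu htr hv]] := exist_part hx.
split; first by exists U.
split; first by exists U.
move=> V Vu hV; apply: upper_R => //.
by case/andP: hx.
Qed.
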